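(* Let $\mathcal{D}$ be a distribution on $\mathbb{S}^{d-1}$ for which there exist $C,C'>0$ with $C\mu(A)\le\mathcal{D}(A)\le C'\mu(A)$ for all measurable $A\subseteq\mathbb{S}^{d-1}$, where $\mu$ is the uniform (Haar) probability measure. There exist constants $\beta,\gamma>0$, depending only on $d$ and on $C,C'$, such that for all $\mathbf{x}^{(1)},\mathbf{x}^{(2)}\in\mathbb{S}^{d-1}$ with $\langle\mathbf{x}^{(1)},\mathbf{x}^{(2)}\rangle\ge0$, a random $\xi\sim\mathcal{D}$ satisfies both (1) $\mathrm{sgn}(\langle\mathbf{x}^{(1)},\xi\rangle)=\mathrm{sgn}(\langle\mathbf{x}^{(2)},\xi\rangle)$, and (2) $|\langle\mathbf{x}^{(i)},\xi\rangle|\ge\gamma$ for $i=1,2$, with probability at least $\beta$.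
   Context: $\mathbb{S}^{d-1}$ is the unit sphere in $\mathbb{R}^d$; $\mathrm{sgn}(0)=0$. *)

(* Defs.v *)
From HB Require Import structures.
From mathcomp Require Import all_boot all_order all_algebra.
From mathcomp Require Import all_classical all_reals all_analysis.
Set Implicit Arguments. Unset Strict Implicit. Unset Printing Implicit Defensive.
Import Order.TTheory GRing.Theory Num.Theory.
Local Open Scope classical_set_scope.
Local Open Scope ring_scope.

(* R^d is represented by d.-tuple R, which carries the product (= Borel)
   sigma-algebra of mathcomp-analysis (measurable_structure.v). *)

Section Sphere.
Variable R : realType.

Definition dotp (d : nat) (x y : d.-tuple R) : R :=
  \sum_(i < d) tnth x i * tnth y i.

Definition enorm (d : nat) (x : d.-tuple R) : R := Num.sqrt (dotp x x).

Definition sphere (d : nat) : set (d.-tuple R) := [set x | enorm x = 1].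

Definition unit_ball (d : nat) : set (d.-tuple R) := [set x | enorm x <= 1].

(* Lebesgue measure on R^d, defined as the iterated (Tonelli) integral of
   the indicator function with respect to the one-dimensional Lebesgue
   measure:  vol_0 E = 1_E(()),  vol_{n+1} E = int vol_n (E_x) dx. *)
Fixpoint lebesgue_vol (n : nat) : set (n.-tuple R) -> \bar R :=
  match n return set (n.-tuple R) -> \bar R with
  | 0 => fun E => ((\1_E [tuple] : R))%:E
  | n.+1 => fun E =>
      (\int[@lebesgue_measure R]_x lebesgue_vol [set t | E (cons_tuple x t)])%E
  end.

Definition normalize (d : nat) (x : d.-tuple R) : d.-tuple R :=
  [tuple of map (fun a => a / enorm x) x].

Definition sphere_cone (d : nat) (A : set (d.-tuple R)) : set (d.-tuple R) :=
  [set t | 0 < enorm t <= 1 /\ A (normalize t)].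

(* the uniform (rotation-invariant, Haar) probability measure on S^{d-1},
   realized as the normalized cone measure:
   mu(A) = vol(cone A) / vol(unit ball). *)
Definition sphere_unif (d : nat) (A : set (d.-tuple R)) : \bar R :=
  (lebesgue_vol (sphere_cone A) * (fine (lebesgue_vol (@unit_ball d)))^-1%:E)%E.

End Sphere.

(* Main.v *)
Require Import Defs.
From HB Require Import structures.
From mathcomp Require Import all_boot all_order all_algebra.
From mathcomp Require Import all_classical all_reals all_analysis.
From mathcomp Require Import ring lra.
Import Order.TTheory GRing.Theory Num.Theory.
Local Open Scope classical_set_scope.
Local Open Scope ring_scope.

Module Aux1.

Section Helpers.
Variable R : realType.
Local Open Scope ereal_scope.

Lemma le_integral_any (f g : R -> \bar R) :
  (forall x, 0 <= f x) -> (forall x, f x <= g x) ->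
  \int[@lebesgue_measure R]_x f x <= \int[@lebesgue_measure R]_x g x.
Proof.
move=> f0 fg.
have g0 x : 0 <= g x by apply: le_trans (fg x).
rewrite !ge0_integralE//.
apply: ereal_sup_le => _ [h hf <-]; exists h => //= x.
apply: le_trans (hf x) _; rewrite !patch_setT; exact: fg.
Qed.

Lemma vol_ge0 n (E : set (n.-tuple R)) : 0 <= lebesgue_vol E.
Proof.
elim: n E => [|n IH] E /=; first by rewrite lee_fin /indic; case: (_ \in _).
by apply: integral_ge0 => x _; exact: IH.
Qed.

Lemma vol_le n (E F : set (n.-tuple R)) : E `<=` F -> lebesgue_vol E <= lebesgue_vol F.
Proof.
elim: n E F => [|n IH] E F EF /=.
  rewrite lee_fin /indic; case: (boolP (_ \in E)) => [/set_mem/EF|]; last first.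
    by case: (_ \in F).
  by move=> HF; rewrite (mem_set HF).
apply: le_integral_any => x; first exact: vol_ge0.
by apply: IH => t /= /EF.
Qed.

Lemma vol0 n : lebesgue_vol (@set0 (n.-tuple R)) = 0.
Proof.
elim: n => [|n IH] /=; first by rewrite indic0.
apply: integral0_eq => x _.
by rewrite -IH; congr lebesgue_vol; apply/seteqP; split.
Qed.


Local Close Scope ereal_scope.
Definition box n (c : nat -> R) (s : R) : set (n.-tuple R) :=
  [set t | forall i : 'I_n, `|nth 0 t i - c i| <= s].
Arguments box {n}.

Lemma box_cons n c s x (t : n.-tuple R) :
  box c s (cons_tuple x t) <-> (`|x - c 0%N| <= s /\ box (fun i => c i.+1) s t).
Proof.
split.
  move=> H; split; first exact: (H ord0).
  by move=> i; have := H (lift ord0 i).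
case=> H1 H2; case=> [[|k] Hk] //=.
exact: (H2 (Ordinal (Hk : (k < n)%N))).
Qed.

Local Open Scope ereal_scope.
Lemma vol_box n c s : (0 <= s)%R -> lebesgue_vol (@box n c s) = ((2 * s) ^+ n)%:E.
Proof.
move=> s0; elim: n c => [|n IH] c /=.
  by rewrite expr0 /indic mem_set //; case.
transitivity (\int[@lebesgue_measure R]_x
   ((\1_(`[c 0%N - s, c 0%N + s]%classic) x)%:E * ((2 * s) ^+ n)%:E)).
  apply: eq_integral => x _.
  rewrite /indic; case: (boolP (x \in _)).
    rewrite inE /= in_itv /= => Hx; rewrite mul1e -(IH (fun i => c i.+1)).
    congr lebesgue_vol; apply/seteqP; split => t /=.
      by case/box_cons.
    move=> Ht; apply/box_cons; split => //.
    by rewrite ler_norml; case/andP: Hx => ? ?; apply/andP; split; lra.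
  move=> Hx; rewrite mul0e -(@vol0 n); congr lebesgue_vol; apply/seteqP; split => t //=.
  case/box_cons => H _; case/negP: Hx; rewrite inE /= in_itv /=.
  by move: H; rewrite ler_norml => /andP[] ? ?; apply/andP; split; lra.
rewrite ge0_integralZr//; last 2 first.
- by apply/measurable_realfun.measurable_EFinP; apply: measurable_realfun.measurable_indic.
- by rewrite lee_fin; apply: exprn_ge0; rewrite mulr_ge0.
rewrite integral_indic// setIT.
have HL := @lebesgue_measure_itv R `[c 0%N - s, c 0%N + s]%R.
rewrite [X in X * _ = _](_ : _ = (if (c 0%N - s < c 0%N + s)%R then ((c 0%N + s) - (c 0%N - s))%:E else 0)); last first.
  by rewrite -[RHS]HL.
case: ifP => H.
  by rewrite -EFinM exprS; congr EFin; ring.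
move/negbT: H; rewrite -leNgt => H.
have -> : s = 0%R by lra.
by rewrite mul0e mulr0 expr0n.
Qed.
End Helpers.

End Aux1.
Import Aux1.

Module Aux2.
Set Implicit Arguments. Unset Strict Implicit. Unset Printing Implicit Defensive.

Section Geo.
Variable R : realType.
Implicit Types (n : nat).

Lemma dotpE n (x y : n.-tuple R) : dotp x y = \sum_(i < n) nth 0 x i * nth 0 y i.
Proof. by apply: eq_bigr => i _; rewrite !(tnth_nth 0). Qed.

Lemma dotp_ge0 n (x : n.-tuple R) : 0 <= dotp x x.
Proof. by apply: sumr_ge0 => i _; rewrite -expr2 sqr_ge0. Qed.

Lemma enorm_sq n (x : n.-tuple R) : enorm x ^+ 2 = dotp x x.
Proof. by rewrite /enorm sqr_sqrtr // dotp_ge0. Qed.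

Lemma sphereE n (x : n.-tuple R) : sphere x <-> dotp x x = 1.
Proof.
rewrite /sphere /=; split => [H|H].
  by rewrite -enorm_sq H expr1n.
by rewrite /enorm H sqrtr1.
Qed.

Lemma ballE n (x : n.-tuple R) : enorm x <= 1 <-> dotp x x <= 1.
Proof.
have := enorm_sq x; have : 0 <= enorm x by apply: sqrtr_ge0.
move=> H0 Hs; split => H; first by nra.
by apply/negP => /negP; rewrite -ltNge => Hc; nra.
Qed.

Lemma coord_le n (x : n.-tuple R) (i : 'I_n) : nth 0 x i ^+ 2 <= dotp x x.
Proof.
rewrite dotpE (bigD1 i) //= -expr2 lerDl.
by apply: sumr_ge0 => j _; rewrite -expr2 sqr_ge0.
Qed.

Lemma ball_sub_box n : @unit_ball R n `<=` @box R n (fun _ => 0) 1.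
Proof.
move=> x /= /ballE H i; rewrite subr0 ler_norml.
have := coord_le x i => H2; apply/andP; split; nra.
Qed.

Lemma dotp_normalize n (u t : n.-tuple R) :
  dotp u (normalize t) = dotp u t / enorm t.
Proof.
rewrite /dotp mulr_suml; apply: eq_bigr => i _.
by rewrite /normalize tnth_map mulrA.
Qed.

Lemma dotp_normalize2 n (t : n.-tuple R) : enorm t != 0 ->
  dotp (normalize t) (normalize t) = dotp t t / enorm t ^+ 2.
Proof.
move=> e0; rewrite /dotp mulr_suml; apply: eq_bigr => i _.
rewrite /normalize !tnth_map; field; exact: e0.
Qed.

Lemma coord_bound n (x : n.-tuple R) (i : 'I_n) : sphere x -> -1 <= nth 0 x i <= 1.
Proof.
move/sphereE => H; have := coord_le x i; rewrite H => H2.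
apply/andP; split; nra.
Qed.

Lemma dot_lb n (x y t : n.-tuple R) (c : nat -> R) s :
  sphere x -> sphere y -> 0 <= dotp x y -> 0 < s -> n%:R * s = 1/8 ->
  (forall i : 'I_n, c i = (nth 0 x i + nth 0 y i) / 4) ->
  @box R n c s t -> 1/8 <= dotp x t.
Proof.
move=> sx sy xy s0 ns cE bt.
have H : \sum_(i < n) (nth 0 x i * nth 0 x i / 4 + nth 0 x i * nth 0 y i / 4 - s)
   <= \sum_(i < n) nth 0 x i * nth 0 t i.
  apply: ler_sum => i _.
  have := bt i; rewrite cE ler_norml => /andP[h1 h2].
  have /andP[a1 a2] := coord_bound i sx.
  nra.
rewrite big_split /= big_split /= sumrN sumr_const card_ord -!mulr_suml in H.
rewrite dotpE; move: H; rewrite -!dotpE; move/sphereE: sx => ->.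
rewrite -mulr_natr; lra.
Qed.

Lemma key (a b u s : R) : -s <= u - (a+b)/4 -> u - (a+b)/4 <= s ->
  u*u <= a*a/4 + b*b/4 + 2*s*s.
Proof.
move=> h1 h2.
have [e He] : exists e, e = u - (a+b)/4 by eexists.
rewrite -He in h1 h2.
have -> : u = (a + b)/4 + e by rewrite He; ring.
have E1 : 0 <= (s - e) * (s + e) by apply: mulr_ge0; lra.
have E2 : 0 <= (a - b) * (a - b) by rewrite -expr2 sqr_ge0.
have E3 : 0 <= ((a + b)/4 - e) * ((a + b)/4 - e) by rewrite -expr2 sqr_ge0.
nra.
Qed.

Lemma dot_ub n (x y t : n.-tuple R) (c : nat -> R) s :
  sphere x -> sphere y -> 0 < s -> s <= 1/8 -> n%:R * s = 1/8 ->
  (forall i : 'I_n, c i = (nth 0 x i + nth 0 y i) / 4) ->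
  @box R n c s t -> dotp t t <= 1.
Proof.
move=> sx sy s0 s8 ns cE bt.
have H : \sum_(i < n) nth 0 t i * nth 0 t i <=
   \sum_(i < n) (nth 0 x i * nth 0 x i / 4 + nth 0 y i * nth 0 y i / 4 + 2 * s * s).
  apply: ler_sum => i _.
  have := bt i; rewrite cE ler_norml => /andP[h1 h2].
  exact: key h1 h2.
rewrite big_split /= big_split /= sumr_const card_ord -!mulr_suml in H.
move: H; rewrite -!dotpE; move/sphereE: sx => ->; move/sphereE: sy => ->.
rewrite -mulr_natr => H.
have E : 2 * s * s * n%:R = 2 * s * (n%:R * s) by ring.
rewrite ns in E; lra.
Qed.

Lemma dotpC n (x y : n.-tuple R) : dotp x y = dotp y x.
Proof. by apply: eq_bigr => i _; rewrite mulrC. Qed.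

Definition Sset n (x1 x2 : n.-tuple R) (g : R) : set (n.-tuple R) :=
  [set xi | Num.sg (dotp x1 xi) = Num.sg (dotp x2 xi)
            /\ (g <= `|dotp x1 xi|)%R /\ (g <= `|dotp x2 xi|)%R].

Lemma box_sub_cone n (x1 x2 : n.-tuple R) s :
  sphere x1 -> sphere x2 -> 0 <= dotp x1 x2 -> 0 < s -> s <= 1/8 -> n%:R * s = 1/8 ->
  @box R n (fun i => (nth 0 x1 i + nth 0 x2 i)/4) s `<=`
     sphere_cone (Sset x1 x2 (1/8) `&` @sphere R n).
Proof.
move=> sx1 sx2 x12 s0 s8 ns t bt.
have h1 := dot_lb sx1 sx2 x12 s0 ns (fun i => erefl) bt.
have h2 : 1/8 <= dotp x2 t.
  apply: (dot_lb sx2 sx1 _ s0 ns _ bt); first by rewrite dotpC.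
  by move=> i; rewrite addrC.
have ub := dot_ub sx1 sx2 s0 s8 ns (fun i => erefl) bt.
have pos : 0 < dotp t t.
  rewrite lt_neqAle dotp_ge0 andbT; apply/negP => /eqP H0.
  have Z : forall i : 'I_n, tnth t i = 0.
    move=> i.
    have P0 : forall j : 'I_n, xpredT j -> 0 <= tnth t j * tnth t j.
      by move=> j _; rewrite -expr2 sqr_ge0.
    have := @psumr_eq0P _ _ xpredT (fun i => tnth t i * tnth t i) P0 (esym H0) i isT.
    by move/eqP; rewrite mulf_eq0 orbb => /eqP.
  have : dotp x1 t = 0 by rewrite /dotp big1 // => i _; rewrite Z mulr0.
  lra.
have e0 : 0 < enorm t by rewrite /enorm sqrtr_gt0.
have e1 : enorm t <= 1 by apply/ballE.
split; first by apply/andP.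
split; last first.
  apply/sphereE; rewrite dotp_normalize2 ?gt_eqF // -enorm_sq divff //.
  by rewrite expf_neq0 // gt_eqF.
rewrite /Sset /= !dotp_normalize.
have g1 : 1/8 <= dotp x1 t / enorm t by rewrite ler_pdivlMr //; nra.
have g2 : 1/8 <= dotp x2 t / enorm t by rewrite ler_pdivlMr //; nra.
rewrite !gtr0_sg ?ger0_norm //; try lra.
Qed.

End Geo.


Section Meas.
Variable R : realType.

Lemma mdotp n (u : n.-tuple R) : measurable_fun setT (fun xi : n.-tuple R => dotp u xi).
Proof.
rewrite /dotp; apply: measurable_sum => i.
apply: measurable_realfun.measurable_funM; first exact: measurable_cst.
exact: measurable_tnth.
Qed.

Lemma mdotp2 n : measurable_fun setT (fun xi : n.-tuple R => dotp xi xi).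
Proof.
rewrite /dotp; apply: measurable_sum => i.
by apply: measurable_realfun.measurable_funM; exact: measurable_tnth.
Qed.

Lemma meas_ge n (f : n.-tuple R -> R) a : measurable_fun setT f ->
  measurable [set x | a <= f x].
Proof.
move=> mf; have := mf measurableT _ (measurable_itv `[a, +oo[); rewrite setTI.
congr measurable; apply/seteqP; split => x /=; by rewrite in_itv /= andbT.
Qed.

Lemma meas_le n (f : n.-tuple R -> R) a : measurable_fun setT f ->
  measurable [set x | f x <= a].
Proof.
move=> mf; have := mf measurableT _ (measurable_itv `]-oo, a]); rewrite setTI.
congr measurable; apply/seteqP; split => x /=; by rewrite in_itv /=.
Qed.

Lemma meas_eq n (f : n.-tuple R -> R) a : measurable_fun setT f ->
  measurable [set x | f x = a].
Proof.
move=> mf; have := mf measurableT _ (measurable_set1 a); rewrite setTI.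
by congr measurable.
Qed.

Lemma meas_sphere n : measurable (@sphere R n).
Proof.
rewrite (_ : @sphere R n = [set x | dotp x x = 1]); first by apply: meas_eq; exact: mdotp2.
by apply/seteqP; split => x /sphereE.
Qed.

Lemma meas_S n (x1 x2 : n.-tuple R) g : 0 < g -> measurable (Sset x1 x2 g).
Proof.
move=> g0.
rewrite (_ : Sset x1 x2 g = ([set x | g <= dotp x1 x] `&` [set x | g <= dotp x2 x]) `|`
   ([set x | dotp x1 x <= - g] `&` [set x | dotp x2 x <= - g])).
  apply: measurableU; apply: measurableI;
   (apply: meas_ge || apply: meas_le); exact: mdotp.
apply/seteqP; split => x; rewrite /Sset /=.
  case=> Hs [H1 H2].
  have [f0|f0] := lerP 0 (dotp x1 x).
    rewrite ger0_norm // in H1.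
    have : Num.sg (dotp x2 x) = 1 by rewrite -Hs gtr0_sg //; lra.
    move/eqP; rewrite sgr_cp0 => g2; rewrite ger0_norm in H2; last lra.
    by left.
  rewrite ltr0_norm // in H1.
  have : Num.sg (dotp x2 x) = -1 by rewrite -Hs ltr0_sg.
  move/eqP; rewrite sgr_cp0 => g2; rewrite ltr0_norm in H2 => //.
  by right; split; lra.
case=> -[H1 H2].
  by rewrite !gtr0_sg ?ger0_norm //; lra.
have a1 : dotp x1 x < 0 by lra.
have a2 : dotp x2 x < 0 by lra.
by rewrite !ltr0_sg ?ltr0_norm //; split => //; lra.
Qed.

End Meas.

End Aux2.
Import Aux2.

Theorem lemma3p5 (R : realType) (d : nat) (C C' : R) :
  0 < C -> 0 < C' ->
  exists beta gamma : R, 0 < beta /\ 0 < gamma /\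
    forall D : probability (d.-tuple R) R,
      D (@sphere R d) = 1%E ->
      (forall A : set (d.-tuple R), measurable A -> A `<=` @sphere R d ->
         (C%:E * sphere_unif A <= D A)%E /\ (D A <= C'%:E * sphere_unif A)%E) ->
      forall x1 x2 : d.-tuple R,
        sphere x1 -> sphere x2 -> 0 <= dotp x1 x2 ->
        (beta%:E <= D [set xi | Num.sg (dotp x1 xi) = Num.sg (dotp x2 xi)
                                /\ (gamma <= `|dotp x1 xi|)%R
                                /\ (gamma <= `|dotp x2 xi|)%R])%E.
Proof.
move=> C0 C'0.
case: d => [|n].
  exists 1, 1; split; first lra; split; first lra.
  move=> D D1 _ x1 x2 sx1.
  exfalso; move/sphereE: sx1; rewrite /dotp big_ord0 => /eqP; rewrite eq_sym oner_eq0.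
  done.
set N := n.+1.
set s : R := (8 * N%:R)^-1.
have s0 : 0 < s by rewrite invr_gt0 mulr_gt0 // ltr0n.
have ns : N%:R * s = 1/8.
  rewrite /s; field; rewrite pnatr_eq0 //.
have N1 : 1 <= N%:R :> R by rewrite ler1n.
have s8 : s <= 1/8 by nra.
exists (C * s ^+ N), (1/8); split; first by rewrite mulr_gt0 // exprn_gt0.
split; first lra.
move=> D D1 HD x1 x2 sx1 sx2 x12.
set A := Sset x1 x2 (1/8) `&` @sphere R N.
have mS : measurable (Sset x1 x2 (1/8)) by apply: meas_S; lra.
have mA : measurable A by apply: measurableI => //; exact: meas_sphere.
apply: (@le_trans _ _ (D A)); last first.
  by apply: le_measure; rewrite ?inE //; exact: subIsetl.
apply: le_trans (HD A mA (@subIsetr _ _ _)).1.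
rewrite EFinM; apply: lee_wpmul2l; first by rewrite lee_fin ltW.
have Hbox := box_sub_cone sx1 sx2 x12 s0 s8 ns.
have vc : (((2 * s) ^+ N)%:E <= lebesgue_vol (sphere_cone A))%E.
  by rewrite -(@vol_box R N (fun i : nat => (x1`_i + x2`_i) / 4) s (ltW s0)); apply: vol_le.
have cb : sphere_cone A `<=` @unit_ball R N.
  by move=> t [/andP[_ ?] _].
have vb1 : (((2 * s) ^+ N)%:E <= lebesgue_vol (@unit_ball R N))%E.
  by apply: le_trans vc _; apply: vol_le.
have vb2 : (lebesgue_vol (@unit_ball R N) <= (2 ^+ N)%:E)%E.
  have := @vol_box R N (fun _ => 0) 1 (@ler01 R); rewrite mulr1 => <-.
  by apply: vol_le; exact: ball_sub_box.
set V := lebesgue_vol (@unit_ball R N) in vb1 vb2 *.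
have Vfin : V \is a fin_num.
  by rewrite ge0_fin_numE ?(le_lt_trans vb2) ?ltry //; apply: le_trans vb1; rewrite lee_fin exprn_ge0 // mulr_ge0 // ltW.
rewrite -(fineK Vfin) !lee_fin in vb1 vb2.
have fV0 : 0 < fine V by apply: lt_le_trans vb1; rewrite exprn_gt0 // mulr_gt0.
rewrite /sphere_unif -/V.
apply: le_trans (lee_wpmul2r _ vc); last by rewrite lee_fin invr_ge0 ltW.
rewrite -EFinM lee_fin exprMn -mulrA mulrC.
rewrite mulrAC ler_pdivlMr //; apply: ler_wpM2l => //.
by rewrite exprn_ge0 // ltW.
Qed.
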